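(* Let $k\ge 3$ be odd and let $G$ be an odd unicycle graph of girth $k$ with $n=|V(G)|$, whose unique cycle has vertices $u,u_1,\dots,u_{k-1}$ with $\deg u=4$ and $\deg u_i=2$ for $1\le i\le k-1$. Let $F$ be the set of edges of $G$ having no endpoint on the cycle. Let $\det(xI-T)=\sum_{j=0}^n\rho_j x^j$ be the characteristic polynomial of the transition matrix $T$ of $G$. Let $t$ be an integer with $1\le t\le (k-1)/2$. If $2^{k+2t}\rho_{n-k-2t}\in\mathbb{Z}$, then $$2^{2t}\sum_{\{e_1,\dots,e_t\}}\prod_{l=1}^t M(e_l)\in\mathbb{Z},$$ where the sum runs over all $t$-matchings $\{e_1,\dots,e_t\}\subseteq F$.
   Context: Graphs are simple, connected and finite. An odd unicycle graph is a non-bipartite graph with $|V|=|E|$, i.e. a connected graph with exactly one cycle, of odd length (its girth). The transition matrix $T$ on $\mathbb{C}^V$ has entries $T_{a,b}=1/\deg a$ if $a\sim b$ and $0$ otherwise. A $t$-matching is a set of $t$ pairwise disjoint edges. For an edge $e=ab$, $M(e)=\frac{1}{\deg a}\cdot\frac{1}{\deg b}$ (degrees in $G$). *)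

(* Defs.v *)
From HB Require Import structures.
From mathcomp Require Import all_boot all_order all_algebra.
Set Implicit Arguments. Unset Strict Implicit. Unset Printing Implicit Defensive.
Import Order.TTheory GRing.Theory Num.Theory.
Local Open Scope ring_scope.

Definition simple_graph (V : finType) (adj : rel V) : Prop :=
  symmetric adj /\ irreflexive adj.

Definition graph_connected (V : finType) (adj : rel V) : Prop :=
  forall a b : V, connect adj a b.

Definition deg (V : finType) (adj : rel V) (a : V) : nat := #|adj a|.

Definition edges (V : finType) (adj : rel V) : {set {set V}} :=
  [set [set a; b] | a in V, b in V & adj a b].

Definition bipartite (V : finType) (adj : rel V) : Prop :=
  exists f : V -> bool, forall a b, adj a b -> f a != f b.

Definition odd_unicycle (V : finType) (adj : rel V) : Prop :=
  [/\ simple_graph adj, graph_connected adj, #|edges adj| = #|V|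
    & ~ bipartite adj].

Definition transition (V : finType) (adj : rel V) : 'M[rat]_#|V| :=
  \matrix_(i, j) (if adj (enum_val i) (enum_val j)
                  then ((deg adj (enum_val i))%:R)^-1 else 0).

Definition Mw (V : finType) (adj : rel V) (e : {set V}) : rat :=
  \prod_(a in e) ((deg adj a)%:R)^-1.

Definition is_matching_in (V : finType) (F : {set {set V}}) (t : nat)
  (S : {set {set V}}) : bool :=
  [&& S \subset F, #|S| == t &
   [forall e1 in S, forall e2 in S, (e1 != e2) ==> [disjoint e1 & e2]]].

(* Main.v *)
Require Import Defs.
From HB Require Import structures.
From mathcomp Require Import all_boot all_order all_algebra.
From mathcomp Require Import fingroup perm zify ring.
Set Implicit Arguments. Unset Strict Implicit. Unset Printing Implicit Defensive.
Import Order.TTheory GRing.Theory Num.Theory.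

Section P1S.
Local Open Scope ring_scope.


Section Transfer.
Variable V : finType.

Definition hf (s : {perm V}) (i : 'I_#|V|) : 'I_#|V| := enum_rank (s (enum_val i)).
Lemma hf_inj (s : {perm V}) : injective (hf s).
Proof. by move=> i j /enum_rank_inj /perm_inj /enum_val_inj. Qed.
Definition hp s : {perm 'I_#|V|} := perm (@hf_inj s).
Lemma hpE s i : hp s i = enum_rank (s (enum_val i)).
Proof. by rewrite permE. Qed.

Definition hg (s : {perm 'I_#|V|}) (x : V) : V := enum_val (s (enum_rank x)).
Lemma hg_inj (s : {perm 'I_#|V|}) : injective (hg s).
Proof. by move=> i j /enum_val_inj /perm_inj /enum_rank_inj. Qed.
Definition hq s : {perm V} := perm (@hg_inj s).

Lemma hp_bij : bijective hp.
Proof.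
exists hq => s; apply/permP => x.
  by rewrite permE /hg hpE !enum_rankK.
by rewrite hpE permE /hg !enum_valK.
Qed.

Lemma hpM s1 s2 : hp (s1 * s2)%g = (hp s1 * hp s2)%g.
Proof. by apply/permP => i; rewrite permM !hpE permM enum_rankK. Qed.

Lemma hp1 : hp 1%g = 1%g.
Proof. by apply/permP => i; rewrite hpE !perm1 enum_valK. Qed.

Lemma hp_tperm a b : hp (tperm a b) = tperm (enum_rank a) (enum_rank b).
Proof.
apply/permP => i; rewrite hpE.
have -> : i = enum_rank (enum_val i) by rewrite enum_valK.
rewrite enum_rankK; set x := enum_val i.
case: (tpermP a b x) => [->|->|xa xb]; first by rewrite tpermL.
  by rewrite tpermR.
rewrite tpermD // ; apply/eqP => /enum_rank_inj; [exact/nesym | exact/nesym].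
Qed.

Lemma odd_hp s : odd_perm (hp s) = odd_perm s.
Proof.
case: (prod_tpermP s) => ts -> dts.
have -> : hp (\prod_(t <- ts) tperm t.1 t.2)%g =
   (\prod_(t <- map (fun t => (enum_rank t.1, enum_rank t.2)) ts) tperm t.1 t.2)%g.
  elim: ts {dts} => [|t ts IH]; first by rewrite !big_nil hp1.
  by rewrite /= !big_cons hpM IH hp_tperm.
rewrite !odd_perm_prod ?size_map //.
by rewrite all_map; apply: sub_all dts => t /=; rewrite /dpair (inj_eq enum_rank_inj).
Qed.

End Transfer.

Definition aw (V : finType) (adj : rel V) (x y : V) : rat :=
  if adj x y then ((deg adj x)%:R)^-1 else 0.

Lemma coef_char (V : finType) (adj : rel V) (irr : irreflexive adj) j :
  (char_poly (transition adj))`_j =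
  \sum_(s : {perm V}) (-1) ^+ s * ((#|[pred x | s x == x]| == j)%:R *
        \prod_(x | s x != x) (- aw adj x (s x))).
Proof.
rewrite /char_poly /determinant coef_sum (reindex (@hp V)); last first.
  by apply: onW_bij; apply: hp_bij.
apply: eq_bigr => s _.
have -> : ((-1) ^+ hp s : {poly rat}) = ((-1) ^+ s)%:P.
  by rewrite odd_hp rmorphXn rmorphN1.
rewrite coefCM; congr (_ * _).
rewrite (reindex (@enum_rank V)) /=; last first.
  by apply: onW_bij; exists enum_val; [apply: enum_rankK | apply: enum_valK].
have E : forall x, char_poly_mx (transition adj) (enum_rank x) (hp s (enum_rank x))
   = (if s x == x then 'X else (- aw adj x (s x))%:P).
  move=> x; rewrite !mxE hpE !enum_rankK (inj_eq enum_rank_inj) /aw eq_sym.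
  case: eqP => [->|_]; first by rewrite irr mulr1n subr0.
  by rewrite mulr0n sub0r polyCN.
rewrite (eq_bigr _ (fun x _ => E x)) (bigID (fun x => s x == x)) /=.
rewrite (eq_bigr (fun _ => 'X)); last by move=> x H; rewrite H.
rewrite [X in _ * X](eq_bigr (fun x => (- aw adj x (s x))%:P)); last by move=> x H; rewrite (negbTE H).
rewrite prodr_const -rmorph_prod coefXnM coefC.
case: ltnP => [lt|le]; first by rewrite (gtn_eqF lt) mul0r.
rewrite subn_eq0; case: (leqP j _) => h.
  have -> : #|[pred x | s x == x]| == j by rewrite eqn_leq; apply/andP; split.
  by rewrite mul1r.
have -> : #|[pred x | s x == x]| == j = false.
  exact: ltn_eqF h.
by rewrite mul0r.
Qed.

End P1S.

Lemma set2_eq (T : finType) (a b a' b' : T) : a != b ->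
  [set a; b] = [set a'; b'] -> (a = a' /\ b = b') \/ (a = b' /\ b = a').
Proof.
move=> ab E.
have : a \in [set a'; b'] by rewrite -E set21.
have : b \in [set a'; b'] by rewrite -E set22.
rewrite !inE => /orP [/eqP hb | /eqP hb] /orP [/eqP ha | /eqP ha].
- by move: ab; rewrite ha hb eqxx.
- by right.
- by left.
- by move: ab; rewrite ha hb eqxx.
Qed.

Lemma valS k (i : 'I_k) : nat_of_ord (ordS i) = if i.+1 == k then 0%N else i.+1.
Proof.
rewrite /=; case: eqP => [->|ne]; first by rewrite modnn.
by rewrite modn_small // ltn_neqAle ltn_ord andbT; apply/eqP.
Qed.

Lemma valPred k (i : 'I_k) : nat_of_ord (ord_pred i) = if nat_of_ord i == 0%N then k.-1 else i.-1.
Proof.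
have lt := ltn_ord i.
rewrite /=; case: eqP => [->|ne].
  by rewrite add0n modn_small // prednK ?leqnn // (leq_ltn_trans _ lt).
have -> : (i + k).-1 = i.-1 + k by case: (val i) ne lt => [//|m] _ _; rewrite addSn.
by rewrite modnDr modn_small // (leq_ltn_trans _ lt) // leq_pred.
Qed.

Lemma ordSS k (i : 'I_k) : (2 < k)%N -> ordS (ordS i) != i.
Proof.
move=> k3; apply/eqP => /(congr1 (@nat_of_ord k)) E.
have h1 := valS i; have h2 := valS (ordS i); have lt := ltn_ord i.
move: E h1 h2 lt.
move: (nat_of_ord (ordS (ordS i))) (nat_of_ord (ordS i)) (nat_of_ord i) => z x y.
case: eqP; case: eqP; lia.
Qed.

Lemma ordSP k (i : 'I_k) : (2 < k)%N -> ordS i != ord_pred i.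
Proof.
move=> k3; apply/eqP => E; move: (ordSS i k3); rewrite E ord_predK.
by rewrite eqxx.
Qed.

Lemma ordS_neq k (i : 'I_k) : (1 < k)%N -> ordS i != i.
Proof.
move=> k2; apply/eqP => /(congr1 (@nat_of_ord k)) E.
have h1 := valS i; have lt := ltn_ord i.
move: E h1 lt; move: (nat_of_ord (ordS i)) (nat_of_ord i) => x y.
case: eqP; lia.
Qed.

Lemma edges_ge (V : finType) (r : rel V) (k : nat) (c : 'I_k -> V) :
  symmetric r -> irreflexive r -> (forall a b, connect r a b) -> (2 < k)%N ->
  injective c -> (forall i, r (c i) (c (ordS i))) -> (#|V| <= #|edges r|)%N.
Proof.
move=> rsym rirr rc k3 cinj cadj.
pose Cs := [set c i | i : 'I_k].
pose step (S : {set V}) := S :|: [set y | [exists z in S, r z y]].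
pose L j := iter j step Cs.
have k0 : (0 < k)%N by apply: leq_ltn_trans k3.
pose i0 : 'I_k := Ordinal k0.
have Lpath : forall p a j, a \in L j -> path r a p -> last a p \in L (j + size p).
  elim => [|b p IH] a j Ha /=; first by rewrite addn0.
  case/andP => rab pb; rewrite addnS -addSn; apply: IH pb.
  rewrite /L /= /step in_setU; apply/orP; right; rewrite inE.
  by apply/existsP; exists a; rewrite Ha rab.
have exP : forall v, exists j, v \in L j.
  move=> v; case/connectP: (rc (c i0) v) => p pth ->.
  by exists (0 + size p)%N; apply: Lpath => //; rewrite /L /= imset_f.
pose d v := ex_minn (exP v).
have dP : forall v, v \in L (d v) by move=> v; rewrite /d; case: ex_minnP.
have dmin : forall v j, v \in L j -> (d v <= j)%N.
  by move=> v j; rewrite /d; case: ex_minnP => m _ H; apply: H.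
pose p v := odflt v [pick z | r v z && (d z < d v)%N].
have pP : forall v, v \notin Cs -> r v (p v) && (d (p v) < d v)%N.
  move=> v vC; rewrite /p; case: pickP => [z // | none]; exfalso.
  have := dP v; have dm := dmin v; case E: (d v) => [|j].
    by rewrite /L /= (negbTE vC).
  rewrite /L /= /step in_setU => /orP [H|H].
    by have := dm j H; rewrite E ltnn.
  move: H; rewrite inE => /existsP [z /andP [zL rzv]].
  by have := none z; rewrite rsym rzv /= E ltnS (dmin z j zL).
pose g v := if [pick i | c i == v] is Some i then [set c i; c (ordS i)]
            else [set v; p v].
have notC : forall v, (forall i, (c i == v) = false) -> v \notin Cs.
  by move=> v H; apply/imsetP => [[i _ E]]; move: (H i); rewrite E eqxx.
have gE : forall v, g v \in edges r.
  move=> v; rewrite /g; case: pickP => [i _ | none].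
    by apply/imset2P; exists (c i) (c (ordS i)); rewrite ?inE ?cadj.
  have /andP [H _] := pP v (notC v none).
  by apply/imset2P; exists v (p v); rewrite ?inE.
have ginj : injective g.
  move=> u v; rewrite /g.
  case: pickP => [i /eqP ei | nu]; case: pickP => [j /eqP ej | nv] => H.
  - have ne : c i != c (ordS i).
      by rewrite (inj_eq cinj) eq_sym ordS_neq // ltnW.
    case: (set2_eq ne H) => [[/cinj E _]|[/cinj E1 /cinj E2]].
      by rewrite -ei -ej E.
    by move: (ordSS j k3); rewrite -E1 E2 eqxx.
  - have vC := notC v nv.
    have : v \in [set c i; c (ordS i)] by rewrite H set21.
    by rewrite !inE => /orP [] /eqP E; move: vC; rewrite E imset_f.
  - have uC := notC u nu.
    have : u \in [set c j; c (ordS j)] by rewrite -H set21.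
    by rewrite !inE => /orP [] /eqP E; move: uC; rewrite E imset_f.
  - have /andP [ru du] := pP u (notC u nu).
    have /andP [rv dv] := pP v (notC v nv).
    have ne : u != p u by apply/eqP => E; move: ru; rewrite -E rirr.
    case: (set2_eq ne H) => [[//]|[E1 E2]].
    by move: du dv; rewrite -E1 E2 => du dv; move: (ltn_trans du dv); rewrite ltnn.
rewrite -(card_imset _ ginj); apply: subset_leq_card; apply/subsetP => E.
by case/imsetP => v _ ->.
Qed.

Lemma iter_ordS_val k (i : 'I_k) n : nat_of_ord (iter n (@ordS k) i) = (i + n) %% k.
Proof.
elim: n => [|n IH]; first by rewrite addn0 modn_small.
by rewrite iterS /= IH -addn1 modnDml addn1 addnS.
Qed.

Lemma iter_ordS_surj k (i j : 'I_k) : exists n, iter n (@ordS k) i = j.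
Proof.
exists (j + k - i)%N; apply: val_inj => /=; rewrite iter_ordS_val.
rewrite subnKC; last by rewrite (leq_trans (ltnW (ltn_ord i))) // leq_addl.
by rewrite modnDr modn_small.
Qed.

Definition sadj (V : finType) (adj : rel V) (s : {perm V}) :=
  forall x, s x != x -> adj x (s x).

Definition P3 (V : finType) (s : {perm V}) (x : V) := (s x != x) && (s (s x) != x).

Lemma P3inv (V : finType) (s : {perm V}) x : P3 s x -> P3 s (s x).
Proof.
case/andP => h1 h2; apply/andP; split.
  by apply: contra h1 => /eqP /perm_inj ->.
by apply: contra h2 => /eqP /perm_inj ->.
Qed.

Lemma sadjV (V : finType) (adj : rel V) (s : {perm V}) :
  symmetric adj -> sadj adj s -> sadj adj (s^-1)%g.
Proof.
move=> asym sa x ne; set y := ((s^-1)%g : {perm V}) x.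
have sy : s y = x by rewrite /y permKV.
have : s y != y by rewrite sy eq_sym.
by move/sa; rewrite sy asym.
Qed.

Definition dirf k (b : bool) : 'I_k -> 'I_k := if b then @ordS k else @ord_pred k.

Lemma card_inv (T : finType) (s : {perm T}) (A : {set T}) :
  (forall x, x \in A -> [&& s x \in A, s x != x & s (s x) == x]) ->
  #|A| = (2 * #|[set x in A | enum_rank x < enum_rank (s x)]|)%N.
Proof.
move=> H.
pose B := [set x | enum_rank x < enum_rank (s x)].
have := cardsID B A.
have -> : A :&: B = [set x in A | enum_rank x < enum_rank (s x)].
  by apply/setP => x; rewrite !inE.
have -> : A :\: B = s @: [set x in A | enum_rank x < enum_rank (s x)].
  apply/setP => z; rewrite !inE; apply/andP/imsetP.
    case=> zB zA; have /and3P [sA sz ssz] := H z zA.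
    exists (s z); last by rewrite (eqP ssz).
    rewrite inE sA (eqP ssz) /=.
    rewrite ltn_neqAle leqNgt zB andbT.
    by apply/eqP => /val_inj /enum_rank_inj e; rewrite e eqxx in sz.
  case=> x; rewrite inE => /andP [xA lt] ->.
  have /and3P [sA sx ssx] := H x xA.
  by rewrite sA (eqP ssx) -leqNgt ltnW.
by rewrite card_imset; [move=> <-; rewrite mul2n addnn | apply: perm_inj].
Qed.

Section Comb.
Variables (V : finType) (adj : rel V) (k : nat) (c : 'I_k -> V).
Hypotheses (asym : symmetric adj) (airr : irreflexive adj)
  (aconn : forall a b, connect adj a b) (acard : #|edges adj| = #|V|)
  (k3 : (2 < k)%N) (cinj : injective c)
  (cadj : forall i, adj (c i) (c (ordS i)))
  (cdeg : forall i : 'I_k, deg adj (c i) = if val i == 0%N then 4%N else 2%N).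

Definition Cs := [set c i | i : 'I_k].

Lemma L2 (s : {perm V}) : sadj adj s -> forall x, P3 s x -> x \in Cs.
Proof.
move=> sa x /andP [m1 m2]; apply/negPn/negP => xC.
pose E0 := [set x; s x].
pose r a b := adj a b && ([set a; b] != E0).
have rsym : symmetric r by move=> a b; rewrite /r asym setUC.
have rirr : irreflexive r by move=> a; rewrite /r airr.
have rcyc : forall i, r (c i) (c (ordS i)).
  move=> i; rewrite /r cadj /=; apply/eqP => E.
  have : x \in [set c i; c (ordS i)] by rewrite E set21.
  by rewrite !inE => /orP [] /eqP E'; move: xC; rewrite E' imset_f.
have sinv : forall z, s z != z -> s (s z) != s z.
  by move=> z; apply: contra => /eqP /perm_inj ->.
have itm : forall j, s (iter j s (s x)) != iter j s (s x).
  by elim => [|j IH] /=; [apply: sinv | apply: sinv].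
have key : forall j, connect r (s x) (iter j s (s x)) \/ connect r (s x) x.
  elim => [|j [IH|IH]]; [by left; apply: connect0 | | by right].
  set y := iter j s (s x) in IH *.
  case: (y =P x) => [yx|ne]; first by right; rewrite yx in IH.
  left; rewrite iterS; apply: connect_trans IH (connect1 _).
  rewrite /r sa ?itm //=; apply/eqP => E.
  have ny : y != s y by rewrite eq_sym itm.
  case: (set2_eq ny E) => [[yx _]|[ys sy]]; first by apply: ne.
  by move: m2; rewrite -ys sy eqxx.
have key2 : connect r (s x) x.
  have := key (#[s]%g).-1; rewrite -iterSr prednK ?order_gt0 // -permX expg_order.
  by rewrite perm1 => [[]].
have rconn : forall a b, connect r a b.
  have sub : subrel adj (connect r).
    move=> a b ab; case E: ([set a; b] == E0); last by apply: connect1; rewrite /r ab E.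
    have nab : a != b by apply/eqP => e; move: ab; rewrite e airr.
    case: (set2_eq nab (eqP E)) => [[-> ->]|[-> ->] //].
    by rewrite (sym_connect_sym rsym).
  by move=> a b; apply: (connect_sub sub); apply: aconn.
have H1 := edges_ge rsym rirr rconn k3 cinj rcyc.
have : edges r \subset edges adj :\ E0.
  apply/subsetP => E /imset2P [a b _ H ->]; move: H; rewrite !inE /r /= => /andP [ab ne].
  by rewrite ne /=; apply/imset2P; exists a b; rewrite ?inE.
move/subset_leq_card => H2.
have E0in : E0 \in edges adj by apply/imset2P; exists x (s x); rewrite ?inE ?sa.
have := cardsD1 E0 (edges adj); rewrite E0in acard => h.
have h2 : #|V| = (#|edges adj :\ E0|).+1 by rewrite h. lia.
Qed.

Lemma deg2 j : nat_of_ord j != 0%N -> forall y, adj (c j) y ->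
  y = c (ordS j) \/ y = c (ord_pred j).
Proof.
move=> j0 y ajy.
have A2 : #|[set z | adj (c j) z]| = 2.
  have <- : deg adj (c j) = 2 by rewrite cdeg (negbTE j0).
  by apply: eq_card => z; rewrite inE.
have sub : [set c (ordS j); c (ord_pred j)] \subset [set z | adj (c j) z].
  apply/subsetP => z; rewrite !inE => /orP [] /eqP ->; first exact: cadj.
  by rewrite asym; have := cadj (ord_pred j); rewrite ord_predK.
have ne : c (ordS j) != c (ord_pred j) by rewrite (inj_eq cinj) ordSP.
have /eqP E : [set c (ordS j); c (ord_pred j)] == [set z | adj (c j) z].
  by rewrite eqEcard sub A2 cards2 ne.
have : y \in [set z | adj (c j) z] by rewrite inE.
by rewrite -E !inE => /orP [] /eqP; auto.
Qed.

Lemma nbrC i y : adj (c i) y -> y \in Cs -> y = c (ordS i) \/ y = c (ord_pred i).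
Proof.
move=> aiy /imsetP [j _ Ey]; rewrite Ey in aiy *.
case: (eqVneq (nat_of_ord i) 0%N) => i0; last by apply: deg2.
have j0 : nat_of_ord j != 0%N.
  apply/eqP => j0; have ij : i = j by apply: val_inj; rewrite /= i0 j0.
  by move: aiy; rewrite ij airr.
have : adj (c j) (c i) by rewrite asym.
move/(deg2 j0) => [/cinj E|/cinj E].
  by right; rewrite E ordSK.
by left; rewrite E ord_predK.
Qed.

Lemma rotS (s : {perm V}) i : sadj adj s -> P3 s (c i) -> s (c i) = c (ordS i) ->
  forall j, s (c j) = c (ordS j).
Proof.
move=> sa P3i si.
have H : forall n, s (c (iter n (@ordS k) i)) = c (ordS (iter n (@ordS k) i))
    /\ P3 s (c (iter n (@ordS k) i)).
  elim => [|n [IH1 IH2]] /=; first by split.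
  set j := iter n (@ordS k) i in IH1 IH2 *.
  have P3j : P3 s (c (ordS j)) by rewrite -IH1; apply: P3inv.
  split=> //.
  have yC : s (c (ordS j)) \in Cs by apply: (L2 sa); apply: P3inv.
  have ay : adj (c (ordS j)) (s (c (ordS j))) by apply: sa; case/andP: P3j.
  case: (nbrC ay yC) => // E.
  by case/andP: IH2 => _; rewrite IH1 E ordSK eqxx.
by move=> j; case: (iter_ordS_surj i j) => n <-; case: (H n).
Qed.

Lemma rotC (s : {perm V}) i : sadj adj s -> P3 s (c i) ->
  exists b, forall j, s (c j) = c (dirf b j).
Proof.
move=> sa P3i.
have yC : s (c i) \in Cs by apply: (L2 sa); apply: P3inv.
have ay : adj (c i) (s (c i)) by apply: sa; case/andP: P3i.
case: (nbrC ay yC) => E; first by exists true; apply: rotS E.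
exists false => j /=.
pose t := (s^-1)%g.
have ta := sadjV asym sa.
have tE : t (c (ord_pred i)) = c (ordS (ord_pred i)) by rewrite ord_predK /t -E permK.
have P3t : P3 t (c (ord_pred i)).
  rewrite /P3 tE ord_predK; apply/andP; split.
    rewrite (inj_eq cinj); apply/eqP => h.
    by have := ordS_neq (ord_pred i) (ltnW k3); rewrite ord_predK -h eqxx.
  case/andP: P3i => _ h2; apply: contra h2 => /eqP h.
  have h' : s (c (ord_pred i)) = c i by rewrite -h /t permKV.
  by rewrite E h'.
have Ht := rotS ta P3t tE.
by have := Ht (ord_pred j); rewrite ord_predK => h; rewrite -h /t permKV.
Qed.

Lemma exP3 (s : {perm V}) : odd #|[set x | s x != x]| -> exists x, P3 s x.
Proof.
move=> oddA; case: (pickP (P3 s)) => [x Px|none]; first by exists x.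
have H : forall x, x \in [set x | s x != x] ->
    [&& s x \in [set x | s x != x], s x != x & s (s x) == x].
  move=> x; rewrite !inE => mx; rewrite mx /=.
  have := none x; rewrite /P3 mx /= => /negbFE ->; rewrite andbT.
  by apply: contra mx => /eqP /perm_inj ->.
by move: oddA; rewrite (card_inv H) oddM.
Qed.

Lemma dirfK b (j : 'I_k) : dirf b (dirf (~~ b) j) = j.
Proof. by case: b; rewrite /= ?ord_predK ?ordSK. Qed.

Lemma dirf_neq b (j : 'I_k) : dirf b j != j.
Proof.
case: b => /=; first exact: ordS_neq (ltnW k3).
apply/eqP => h; have := ordS_neq (ord_pred j) (ltnW k3).
by rewrite ord_predK h eqxx.
Qed.

Lemma offC (s : {perm V}) b : (forall j, s (c j) = c (dirf b j)) -> sadj adj s ->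
  forall x, x \notin Cs -> s x != x -> (s x \notin Cs) && (s (s x) == x).
Proof.
move=> sd sa x xC mx; apply/andP; split.
  apply/imsetP => [[j _ E]].
  have : s (c (dirf (~~ b) j)) = s x by rewrite sd dirfK E.
  by move/perm_inj => ex; move: xC; rewrite -ex imset_f.
case: (boolP (P3 s x)) => [/(L2 sa) |]; first by rewrite (negbTE xC).
by rewrite /P3 mx /= negbK.
Qed.

End Comb.

Lemma odd_permX (T : finType) (s : {perm T}) n : odd_perm (s ^+ n)%g = odd n && odd_perm s.
Proof.
elim: n => [|n IH]; first by rewrite expg0 odd_perm1.
by rewrite expgS odd_permM IH /=; case: (odd_perm s); case: (odd n).
Qed.

Lemma inv_sign (T : finType) N : forall (u : {perm T}),
  #|[set x | u x != x]| = (2 * N)%N -> (forall x, u (u x) = x) -> odd_perm u = odd N.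
Proof.
elim: N => [|N IH] u cu uu.
  have -> : u = 1%g.
    apply/permP => x; rewrite perm1; apply/eqP; apply: contraT => ne.
    have : x \in [set x | u x != x] by rewrite inE.
    by rewrite (cards0_eq (etrans cu (muln0 2))) inE.
  by rewrite odd_perm1.
have : [set x | u x != x] != set0 by rewrite -card_gt0 cu mul2n -addnn addnS.
case/set0Pn => x; rewrite inE => mx.
pose v := (tperm x (u x) * u)%g.
have vE : forall y, v y = u (tperm x (u x) y) by move=> y; rewrite permM.
have ux : u (u x) = x := uu x.
have vx : v x = x by rewrite vE tpermL.
have vux : v (u x) = u x by rewrite vE tpermR.
have vy : forall y, y != x -> y != u x -> v y = u y.
  by move=> y y1 y2; rewrite vE tpermD // eq_sym.
have -> : u = (tperm x (u x) * v)%g by rewrite mulgA tperm2 mul1g.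
rewrite odd_mul_tperm eq_sym mx (IH v) //=.
  apply/eqP; rewrite -(eqn_add2l 2) -mulnS -cu.
  have -> : [set y | u y != y] = x |: (u x |: [set y | v y != y]).
    apply/setP => y; rewrite !inE; case: (y =P x) => [->|nx]; first by rewrite mx.
    case: (y =P u x) => [->|nux] /=; first by rewrite ux eq_sym mx.
    by rewrite vy //; apply/eqP.
  rewrite cardsU1 cardsU1 !inE vx vux !eqxx /= orbF (eq_sym x) mx /=.
  by rewrite addnA.
move=> y; case: (y =P x) => [->|nx]; first by rewrite !vx.
case: (y =P u x) => [->|nux]; first by rewrite !vux.
have h1 : u y != x by apply/eqP => h; apply: nux; rewrite -h uu.
have h2 : u y != u x by apply/eqP => /perm_inj.
by rewrite (vy y) ?(vy (u y)) ?uu //; apply/eqP.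
Qed.

Lemma iter_cancel (T : Type) (f g : T -> T) n x : cancel g f ->
  iter n f (iter n g x) = x.
Proof.
move=> gK; elim: n => [//|n IH].
by rewrite iterSr iterS gK.
Qed.

Lemma disj2 (T : finType) (x y : T) (B : {set T}) :
  x \notin B -> y \notin B -> [disjoint [set x; y] & B].
Proof.
move=> xB yB; rewrite disjoints_subset; apply/subsetP => z.
by rewrite !inE => /orP [] /eqP ->.
Qed.

Section Valid.
Variables (V : finType) (adj : rel V) (k : nat) (c : 'I_k -> V) (t : nat).
Hypotheses (asym : symmetric adj) (airr : irreflexive adj)
  (aconn : forall a b, connect adj a b) (acard : #|edges adj| = #|V|)
  (k3 : (2 < k)%N) (kodd : odd k) (cinj : injective c)
  (cadj : forall i, adj (c i) (c (ordS i)))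
  (cdeg : forall i : 'I_k, deg adj (c i) = if val i == 0%N then 4%N else 2%N).

Definition valid (s : {perm V}) :=
  (#|[set x | s x != x]| == (k + 2 * t)%N) && [forall x, (s x != x) ==> adj x (s x)].
Definition Aset (s : {perm V}) := [set x | (s x != x) && (x \notin Cs c)].
Definition phi (s : {perm V}) := [set [set x; s x] | x in Aset s].

Lemma valid_sadj s : valid s -> sadj adj s.
Proof. by case/andP => _ /forallP H x; move/implyP: (H x). Qed.

Lemma valid_dir s : valid s -> exists b, forall j, s (c j) = c (dirf b j).
Proof.
move=> vs; have sa := valid_sadj vs.
case/andP: vs => /eqP cs _.
have : odd #|[set x | s x != x]| by rewrite cs oddD kodd oddM.
case/exP3 => x Px.
have := @L2 V adj k c asym airr aconn acard k3 cinj cadj s sa x Px.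
case/imsetP => i _ xi; rewrite xi in Px.
exact: (@rotC V adj k c asym airr aconn acard k3 cinj cadj cdeg s i sa Px).
Qed.

Lemma CsA s : [disjoint Cs c & Aset s].
Proof.
rewrite disjoints_subset; apply/subsetP => x xC.
by rewrite !inE xC andbF.
Qed.

Lemma card_Cs : #|Cs c| = k.
Proof. by rewrite card_imset // card_ord. Qed.

Section Dir.
Variables (s : {perm V}) (b : bool).
Hypotheses (vs : valid s) (sd : forall j, s (c j) = c (dirf b j)).

Lemma movedE : [set x | s x != x] = Cs c :|: Aset s.
Proof.
apply/setP => x; rewrite !inE.
case: (boolP (x \in Cs c)) => [/imsetP [j _ ->]|xC] /=.
  by rewrite sd (inj_eq cinj) dirf_neq.
by rewrite andbT.
Qed.

Lemma card_Aset : #|Aset s| = (2 * t)%N.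
Proof.
case/andP: vs => /eqP cs _.
move: cs; rewrite movedE; rewrite -(eqP (CsA s)) => h.
have := cardsU (Cs c) (Aset s); rewrite h card_Cs.
have -> : Cs c :&: Aset s = set0.
  by apply/eqP; rewrite setI_eq0 CsA.
rewrite cards0 subn0 => h2; lia.
Qed.

Lemma Aset_inv x : x \in Aset s -> [&& s x \in Aset s, s x != x & s (s x) == x].
Proof.
rewrite !inE => /andP [mx xC].
have /andP [h1 h2] := @offC V adj k c asym airr aconn acard k3 cinj cadj s b sd
   (valid_sadj vs) x xC mx.
have ss : s (s x) != s x by apply: contra mx => /eqP /perm_inj ->.
by rewrite h1 h2 ss mx.

Qed.

Lemma iter_dir n j : iter n s (c j) = c (iter n (dirf b) j).
Proof. by elim: n => [//|n IH]; rewrite !iterS IH sd. Qed.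

Lemma iter_dirk (j : 'I_k) : iter k (dirf b) j = j.
Proof.
have hS : forall z : 'I_k, iter k (@ordS k) z = z.
  by move=> z; apply: val_inj; rewrite /= iter_ordS_val modnDr modn_small.
case: b => /=; first exact: hS.
by rewrite -[RHS](iter_cancel k j (@ord_predK k)) hS.
Qed.

Lemma sk x : (s ^+ k)%g x = if x \in Cs c then x else s x.
Proof.
rewrite permX; case: ifP => [/imsetP [j _ ->]|xC].
  by rewrite iter_dir iter_dirk.
case: (eqVneq (s x) x) => [fx|mx].
  by rewrite fx; elim: (k) => [//|n IH]; rewrite iterS IH fx.
have /and3P [_ _ /eqP ssx] : [&& s x \in Aset s, s x != x & s (s x) == x].
  by apply: Aset_inv; rewrite inE mx xC.
have : forall n, iter n s x = if odd n then s x else x.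
  by elim => [//|n IH]; rewrite iterS IH /=; case: (odd n).
by move=> ->; rewrite kodd.
Qed.

Lemma sign_s : odd_perm s = odd t.
Proof.
have <- : odd_perm (s ^+ k)%g = odd_perm s by rewrite odd_permX kodd.
apply: inv_sign.
  rewrite -card_Aset; apply: eq_card => x; rewrite !inE sk.
  by case: ifP => xC; rewrite ?eqxx ?andbT ?andbF.
move=> x; rewrite (sk x); case: ifP => xC; first by rewrite sk xC.
case: (eqVneq (s x) x) => [fx|mx]; first by rewrite fx sk xC fx.
have /and3P [sA _ /eqP ssx] : [&& s x \in Aset s, s x != x & s (s x) == x].
  by apply: Aset_inv; rewrite inE mx xC.
by rewrite sk; move: sA; rewrite inE => /andP [_ /negbTE ->].
Qed.

Section R.
Local Open Scope ring_scope.
Definition wdeg (x : V) : rat := ((deg adj x)%:R)^-1.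

Lemma prod_s : \prod_(x | s x != x) (- aw adj x (s x)) =
  (\prod_(x in Cs c) (- wdeg x)) * \prod_(x in Aset s) wdeg x.
Proof.
have sa := valid_sadj vs.
rewrite (eq_bigr (fun x => - wdeg x)); last by move=> x /sa; rewrite /aw => ->.
rewrite (eq_bigl (fun x => x \in [predU Cs c & Aset s])); last first.
  move=> x; rewrite /= !inE; case: (boolP (x \in Cs c)) => /= [/imsetP [j _ ->]|_]; last by rewrite andbT.
  by rewrite sd (inj_eq cinj) dirf_neq.
rewrite bigU ?CsA //; congr (_ * _).
by rewrite prodrN card_Aset exprM sqrrN !expr1n mul1r.
Qed.
End R.

Lemma orb2 x z : x \in Aset s -> z \in [set x; s x] -> [set x; s x] = [set z; s z].
Proof.
move=> xA; rewrite !inE => /orP [] /eqP -> //.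
have /and3P [_ _ /eqP ->] := Aset_inv xA.
by rewrite setUC.
Qed.

Lemma phi_cover : cover (phi s) = Aset s.
Proof.
apply/setP => z; apply/bigcupP/idP.
  case=> E /imsetP [x xA ->] /set2P [] -> //.
  by have /and3P [] := Aset_inv xA.
by move=> zA; exists [set z; s z]; [apply: imset_f | rewrite set21].
Qed.

Lemma phi_disj E1 E2 : E1 \in phi s -> E2 \in phi s -> E1 != E2 -> [disjoint E1 & E2].
Proof.
case/imsetP => x xA ->; case/imsetP => y yA -> ne.
rewrite -setI_eq0; apply/eqP/setP => z; rewrite [RHS]inE; apply/negP => /setIP [z1 z2].
by move: ne; rewrite (orb2 xA z1) (orb2 yA z2) eqxx.
Qed.

Lemma phi_triv : trivIset (phi s).
Proof. by apply/trivIsetP => E1 E2; apply: phi_disj. Qed.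

Lemma card_phi : #|phi s| = t.
Proof.
have H : forall x, x \in Aset s -> [&& s x \in Aset s, s x != x & s (s x) == x].
  exact: Aset_inv.
have := card_inv H; rewrite card_Aset => /eqP; rewrite eqn_pmul2l // => /eqP ->.
set half := [set x in Aset s | _].
have -> : phi s = [set [set x; s x] | x in half].
  apply/setP => E; apply/imsetP/imsetP => [[x xA ->]|[x]]; last first.
    by rewrite inE => /andP [xA _] ->; exists x.
  have /and3P [sA sx /eqP ssx] := Aset_inv xA.
  case: (ltngtP (enum_rank x) (enum_rank (s x))) => [lt|gt|eq].
  - by exists x; rewrite // inE xA lt.
  - exists (s x); last by rewrite ssx setUC.
    by rewrite inE sA ssx gt.
  - by move: (enum_rank_inj (val_inj eq)) => h; rewrite -h eqxx in sx.
apply: card_in_imset => x y /setIdP [xA lx] /setIdP [yA ly] E.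
have /and3P [_ sx _] := Aset_inv xA.
have nx : x != s x by rewrite eq_sym.
case: (set2_eq nx E) => [[//]|[e1 e2]].
by move: lx ly; rewrite -e1 e2 => lx ly; move: (ltn_trans lx ly); rewrite ltnn.
Qed.

End Dir.

Definition Fset := [set e in edges adj | [disjoint e & [set c i | i : 'I_k]]].

Lemma phi_match s : valid s -> is_matching_in Fset t (phi s).
Proof.
move=> vs; case: (valid_dir vs) => b sd.
apply/and3P; split.
- apply/subsetP => E /imsetP [x xA ->].
  have /and3P [sA sx _] := Aset_inv vs sd xA.
  rewrite inE; apply/andP; split.
    by apply/imset2P; exists x (s x); rewrite ?inE // (valid_sadj vs).
  move: xA sA; rewrite !inE => /andP [_ xC] /andP [_ sC].
  exact: disj2.
- by rewrite (card_phi vs sd).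
- apply/forallP => E1; apply/implyP => h1; apply/forallP => E2; apply/implyP => h2.
  apply/implyP; exact: (phi_disj vs sd h1 h2).
Qed.

Section Fib.
Variable S : {set {set V}}.
Hypothesis HS : is_matching_in Fset t S.

Lemma mS E : E \in S -> exists a b, [/\ E = [set a; b], adj a b, a \notin Cs c & b \notin Cs c].
Proof.
case/and3P: HS => /subsetP sub _ _ /sub; rewrite inE => /andP [].
case/imset2P => a b _; rewrite inE => ab -> /=.
rewrite disjoints_subset => /subsetP H.
exists a, b; split => //.
  by have := H a (set21 _ _); rewrite inE.
by have := H b (set22 _ _); rewrite inE.
Qed.

Lemma S_disj E1 E2 : E1 \in S -> E2 \in S -> E1 != E2 -> [disjoint E1 & E2].
Proof.
case/and3P: HS => _ _ /forallP H h1 h2 ne.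
by have := H E1; rewrite h1 /= => /forallP /(_ E2); rewrite h2 ne.
Qed.

Lemma S_share E1 E2 x : E1 \in S -> E2 \in S -> x \in E1 -> x \in E2 -> E1 = E2.
Proof.
move=> h1 h2 x1 x2; apply/eqP; apply: contraT => ne.
have := S_disj h1 h2 ne; rewrite -setI_eq0 => /eqP E.
have : x \in E1 :&: E2 by rewrite inE x1 x2.
by rewrite E inE.
Qed.

Lemma S_neq x y : [set x; y] \in S -> x != y.
Proof.
case/mS => a [b [E ab _ _]].
have ne : a != b by apply/eqP => e; move: ab; rewrite e airr.
have := cards2 x y; rewrite E cards2 ne.
by case: (x != y).
Qed.

Lemma S_notC E z : E \in S -> z \in E -> z \notin Cs c.
Proof. by case/mS => a [b [-> _ aC bC]] /set2P [] ->. Qed.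

Definition pt x := odflt x [pick y | [set x; y] \in S].

Lemma pt_cov x : x \in cover S -> [set x; pt x] \in S.
Proof.
case/bigcupP => E ES xE; rewrite /pt; case: pickP => [y //|none].
case/mS: (ES) => a [b [Eab _ _ _]].
move: xE; rewrite Eab => /set2P [] ex.
  by have := none b; rewrite ex -Eab ES.
by have := none a; rewrite ex setUC -Eab ES.
Qed.

Lemma pt_uniq x y : [set x; y] \in S -> pt x = y.
Proof.
move=> h.
have xc : x \in cover S by apply/bigcupP; exists [set x; y]; rewrite ?set21.
have h2 := pt_cov xc.
have e := S_share h h2 (set21 _ _) (set21 _ _).
have : y \in [set x; pt x] by rewrite -e set22.
case/set2P => [yx|//]; by move: (S_neq h); rewrite yx eqxx.
Qed.

Lemma pt_props x : x \in cover S ->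
  [/\ pt x != x, pt (pt x) = x, x \notin Cs c, pt x \notin Cs c & adj x (pt x)].
Proof.
move=> xc; have h := pt_cov xc.
split.
- by rewrite eq_sym; apply: S_neq h.
- by apply: pt_uniq; rewrite setUC.
- by apply: (S_notC h); rewrite set21.
- by apply: (S_notC h); rewrite set22.
- case/mS: (h) => a [b [E ab _ _]].
  case: (set2_eq (S_neq h) E) => [[-> ->]|[-> ->]] //.
  by rewrite asym.
Qed.

Lemma pt_ncov x : x \notin cover S -> pt x = x.
Proof.
move=> xc; rewrite /pt; case: pickP => [y h|//].
by move: xc; apply: contraNeq => _; apply/bigcupP; exists [set x; y]; rewrite ?set21.
Qed.

Lemma pt_notC x : x \notin Cs c -> pt x \notin Cs c.
Proof.
move=> xC; case: (boolP (x \in cover S)) => xc; first by case: (pt_props xc).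
by rewrite pt_ncov.
Qed.

Lemma ptK x : x \notin Cs c -> pt (pt x) = x.
Proof.
move=> xC; case: (boolP (x \in cover S)) => xc; first by case: (pt_props xc).
by rewrite !pt_ncov.
Qed.

Definition fs b x := if [pick i | c i == x] is Some i then c (dirf b i) else pt x.

Lemma fsC b j : fs b (c j) = c (dirf b j).
Proof.
rewrite /fs; case: pickP => [i /eqP /cinj -> //|none].
by have := none j; rewrite eqxx.
Qed.

Lemma fsN b x : x \notin Cs c -> fs b x = pt x.
Proof.
move=> xC; rewrite /fs; case: pickP => [i /eqP ci|//].
by move: xC; rewrite -ci imset_f.
Qed.

Lemma fsK b : cancel (fs b) (fs (~~ b)).
Proof.
move=> x; case: (boolP (x \in Cs c)) => [/imsetP [j _ ->]|xC].
  by rewrite !fsC -{2}(negbK b) dirfK.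
by rewrite fsN // fsN ?pt_notC // ptK.
Qed.

Definition sigp b : {perm V} := perm (can_inj (fsK b)).

Lemma sigE b x : sigp b x = fs b x.
Proof. by rewrite permE. Qed.

Lemma cover_notC x : x \in cover S -> x \notin Cs c.
Proof. by case/pt_props. Qed.

Lemma sig_moved b : [set x | sigp b x != x] = Cs c :|: cover S.
Proof.
apply/setP => x; rewrite !inE sigE.
case: (boolP (x \in Cs c)) => [/imsetP [j _ ->]|xC] /=.
  by rewrite fsC (inj_eq cinj) dirf_neq.
rewrite fsN //; case: (boolP (x \in cover S)) => xc.
  by case: (pt_props xc).
by rewrite pt_ncov // eqxx.
Qed.

Lemma card_cover : #|cover S| = (2 * t)%N.
Proof.
have tS : trivIset S.
  by apply/trivIsetP => E1 E2 h1 h2; apply: S_disj.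
rewrite -(eqP tS).
rewrite (eq_bigr (fun _ => 2%N)); last first.
  move=> E /mS [a [b [-> ab _ _]]]; rewrite cards2.
  by have -> : a != b by apply/eqP => e; move: ab; rewrite e airr.
case/and3P: HS => _ /eqP <- _.
by rewrite sum_nat_const mulnC.
Qed.

Lemma CsCov : [disjoint Cs c & cover S].
Proof.
rewrite disjoint_sym disjoints_subset; apply/subsetP => x xc.
by rewrite inE cover_notC.
Qed.

Lemma sig_valid b : valid (sigp b).
Proof.
apply/andP; split.
  rewrite sig_moved cardsU card_Cs card_cover.
  have -> : Cs c :&: cover S = set0 by apply/eqP; rewrite setI_eq0 CsCov.
  by rewrite cards0 subn0.
apply/forallP => x; apply/implyP; rewrite sigE.
case: (boolP (x \in Cs c)) => [/imsetP [j _ ->]|xC].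
  rewrite fsC => _; case: b => /=; first exact: cadj.
  by rewrite asym; have := cadj (ord_pred j); rewrite ord_predK.
rewrite fsN //; case: (boolP (x \in cover S)) => xc.
  by case: (pt_props xc).
by rewrite pt_ncov // eqxx.
Qed.

Lemma sig_Aset b : Aset (sigp b) = cover S.
Proof.
apply/setP => x; rewrite inE.
have := sig_moved b; move/setP/(_ x); rewrite !inE => ->.
case: (boolP (x \in Cs c)) => [xC|xC] /=; last by rewrite andbT.
by apply/esym/negbTE; apply: contraL xC; apply: cover_notC.
Qed.

Lemma sig_phi b : phi (sigp b) = S.
Proof.
apply/setP => E; apply/imsetP/idP.
  case=> x; rewrite sig_Aset => xc ->.
  rewrite sigE fsN ?cover_notC //; exact: pt_cov.
move=> ES; case/mS: (ES) => a [b' [Eab _ _ _]].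
have ac : a \in cover S by apply/bigcupP; exists E; rewrite // Eab set21.
exists a; first by rewrite sig_Aset.
rewrite sigE fsN ?cover_notC //.
by apply: (S_share (x := a) ES (pt_cov ac)); rewrite ?Eab set21.
Qed.

Lemma sig_neq : sigp true != sigp false.
Proof.
have k0 : (0 < k)%N by apply: leq_ltn_trans k3.
apply/eqP => /permP /(_ (c (Ordinal k0))); rewrite !sigE !fsC /= => /cinj.
by apply/eqP; rewrite ordSP.
Qed.

Lemma fiber s : valid s -> phi s = S -> s = sigp true \/ s = sigp false.
Proof.
move=> vs ps; case: (valid_dir vs) => b sd.
suff -> : s = sigp b by case: (b); [left|right].
apply/permP => x; rewrite sigE.
case: (boolP (x \in Cs c)) => [/imsetP [j _ ->]|xC]; first by rewrite fsC sd.
rewrite fsN //; case: (eqVneq (s x) x) => [fx|mx].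
  rewrite fx pt_ncov //; rewrite -ps (phi_cover vs sd) inE fx eqxx.
  by [].
have xA : x \in Aset s by rewrite inE mx xC.
have : [set x; s x] \in S by rewrite -ps; apply: imset_f.
by move/pt_uniq.
Qed.

End Fib.

Section Main.
Local Open Scope ring_scope.

Lemma main_sum :
  \sum_(s : {perm V} | #|[set x | s x != x]| == (k + 2 * t)%N)
      (-1) ^+ s * \prod_(x | s x != x) (- aw adj x (s x))
  = ((-1) ^+ odd t * \prod_(x in Cs c) (- wdeg x)) *+ 2 *
    \sum_(S : {set {set V}} | is_matching_in Fset t S) \prod_(E in S) Mw adj E.
Proof.
rewrite (bigID (fun s : {perm V} => [forall x, (s x != x) ==> adj x (s x)])) /=.
rewrite [X in _ + X]big1 ?addr0; last first.
  move=> s /andP [_ /forallPn [x]]; rewrite negb_imply => /andP [mx nadj].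
  rewrite (bigD1 x) //= /aw (negbTE nadj) oppr0 mul0r.
  by rewrite mulr0.
rewrite (eq_bigl (fun s => valid s)) //.
rewrite (partition_big (phi) (fun S => is_matching_in Fset t S)); last exact: phi_match.
rewrite big_distrr /=; apply: eq_bigr => S HS.
have E : forall s, valid s && (phi s == S) ->
    (-1) ^+ s * \prod_(x | s x != x) (- aw adj x (s x)) =
    (-1) ^+ odd t * \prod_(x in Cs c) (- wdeg x) * \prod_(E in S) Mw adj E.
  move=> s /andP [vs /eqP ps]; case: (valid_dir vs) => b sd.
  rewrite (sign_s vs sd) (prod_s vs sd) mulrA.
  rewrite -(phi_cover vs sd) (big_trivIset _ (phi_triv vs sd)) ps.
  by [].
rewrite (eq_bigr _ E).
rewrite (eq_bigl (fun s => s \in [set sigp HS true; sigp HS false])); last first.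
  move=> s; rewrite !inE; apply/idP/idP.
    by case/andP => vs /eqP ps; case: (fiber HS vs ps) => ->; rewrite eqxx ?orbT.
  by case/orP => /eqP ->; rewrite sig_valid // sig_phi ?eqxx.
rewrite sumr_const cards2 (sig_neq HS) mulrnAl.
by [].
Qed.

End Main.

End Valid.

Local Open Scope ring_scope.

Lemma KC_val (V : finType) (adj : rel V) (k : nat) (c : 'I_k -> V) :
  injective c -> odd k ->
  (forall i : 'I_k, deg adj (c i) = if val i == 0%N then 4%N else 2%N) ->
  \prod_(x in Cs c) (- wdeg adj x) = - ((2%:R ^+ k.+1)^-1 : rat).
Proof.
move=> cinj kodd cdeg.
rewrite big_imset /=; last by move=> i j _ _ /cinj.
case: k c cinj kodd cdeg => [//|k'] c cinj kodd cdeg.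
rewrite big_ord_recl /wdeg cdeg /=.
rewrite (eq_bigr (fun _ => - (2%:R ^-1 : rat))); last first.
  by move=> i _; rewrite cdeg /=.
rewrite prodr_const card_ord exprNn.
have -> : (-1) ^+ k' = 1 :> rat by rewrite -signr_odd; move: kodd => /= /negbTE ->.
rewrite mul1r exprVn !exprS.
have h : (2%:R ^+ k' : rat) != 0 by rewrite expf_neq0 // pnatr_eq0.
by field.
Qed.

Lemma coef_bridge (V : finType) (adj : rel V) (irr : irreflexive adj) m :
  (m <= #|V|)%N ->
  (char_poly (transition adj))`_(#|V| - m)%N =
  \sum_(s : {perm V} | #|[set x | s x != x]| == m)
      (-1) ^+ s * \prod_(x | s x != x) (- aw adj x (s x)).
Proof.
move=> mn; rewrite (coef_char irr); symmetry; rewrite big_mkcond; symmetry.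
apply: eq_bigr => s _.
have cc : (#|[pred x | s x == x]| + #|[set x | s x != x]|)%N = #|V|.
  rewrite -(cardC [pred x | s x == x]); congr (_ + _)%N.
  by apply: eq_card => x; rewrite !inE.
have -> : (#|[pred x | s x == x]| == (#|V| - m)%N) = (#|[set x | s x != x]| == m).
  by apply/idP/idP => /eqP h; apply/eqP; lia.
by case: ifP => _; rewrite ?mul1r // mul0r mulr0.
Qed.

Theorem lemma3p3 (V : finType) (adj : rel V) (k : nat) (c : 'I_k -> V) (t : nat) :
  odd_unicycle adj ->
  (3 <= k)%N -> odd k ->
  injective c ->
  (forall i : 'I_k, adj (c i) (c (ordS i))) ->
  (forall i : 'I_k, deg adj (c i) = if val i == 0%N then 4%N else 2%N) ->
  (1 <= t)%N -> (t <= k.-1./2)%N ->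
  let n := #|V| in
  let F := [set e in edges adj | [disjoint e & [set c i | i : 'I_k]]] in
  let rho := fun j : nat => (char_poly (transition adj))`_j in
  (2 ^ (k + 2 * t))%:R *
     (if (k + 2 * t <= n)%N then rho (n - (k + 2 * t))%N else 0) \is a Num.int ->
  (2 ^ (2 * t))%:R *
     (\sum_(S : {set {set V}} | is_matching_in F t S) \prod_(e in S) Mw adj e)
   \is a Num.int.
Proof.
move=> [[asym airr] aconn acard _] k3 kodd cinj cadj cdeg _ _ n F rho.
have MS := @main_sum V adj k c t asym airr aconn acard k3 kodd cinj cadj cdeg.
rewrite (KC_val cinj kodd cdeg) in MS.
change (\sum_(S : {set {set V}} | is_matching_in F t S) \prod_(e in S) Mw adj e)
  with (\sum_(S : {set {set V}} | is_matching_in (Fset adj c) t S) \prod_(E in S) Mw adj E).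
set Sg := \sum_(S : {set {set V}} | is_matching_in (Fset adj c) t S) _ in MS *.
set K := (-1) ^+ odd t * - (2%:R ^+ k.+1)^-1 : rat in MS.
have h2 : (2%:R ^+ k : rat) != 0 by rewrite expf_neq0 // pnatr_eq0.
rewrite /rho /n; case: ifP => mn.
  rewrite coef_bridge // MS => Hint.
  have -> : (2 ^ (2 * t))%:R * Sg = - (-1) ^+ odd t *
       ((2 ^ (k + 2 * t))%:R * (K *+ 2 * Sg)).
    rewrite /K -[_ *+ 2]mulr_natr !natrX exprD exprS.
    by case: (odd t); rewrite /= ?expr0 ?expr1; field.
  by rewrite rpredM // rpredN rpredX // rpredN rpred1.
move=> _.
have Z : \sum_(s : {perm V} | #|[set x | s x != x]| == (k + 2 * t)%N)
      (-1) ^+ s * \prod_(x | s x != x) (- aw adj x (s x)) = 0.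
  rewrite big_pred0 // => s; apply/negbTE; apply: contraFneq mn => <-.
  exact: max_card.
rewrite Z in MS.
have KS : K *+ 2 != 0.
  rewrite -[K *+ 2]mulr_natr /K; apply: mulf_neq0; last by rewrite pnatr_eq0.
  apply: mulf_neq0; first by rewrite signr_eq0.
  by rewrite oppr_eq0 invr_eq0 expf_neq0 // pnatr_eq0.
have -> : Sg = 0.
  by move/eqP: MS; rewrite eq_sym mulf_eq0 (negbTE KS) => /eqP.
by rewrite mulr0 rpred0.
Qed.
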